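(* Let $\alpha>1$, $\varepsilon>0$, $\delta\in(0,1)$, and let $\pi^*$ be the function defined by $\pi^*(0)=0$, $\pi^*(n)=L(\pi^*(n-1))$ for $n>0$, where $L(q)=\max\{p\in[q,1]: D^\delta_\alpha(\mathrm{Ber}(p)\|\mathrm{Ber}(q))\le\varepsilon \text{ and } D^\delta_\alpha(\mathrm{Ber}(q)\|\mathrm{Ber}(p))\le\varepsilon\}$. Suppose $\pi^*(2) > 3\,\pi^*(1)$. Then, for the universe $U=\{1,2\}$, there is no optimal partition selection mechanism for $(\delta,\alpha,\varepsilon)$-RDP with $\Delta_1 = 2$; that is, there is no partition selection mechanism $M^*$ that is $(\delta,\alpha,\varepsilon)$-RDP for $\Delta_1=2$ such that $\mathbb{E}[|M^*(X)|]\ge\mathbb{E}[|M(X)|]$ for every dataset $X$ and every partition selection mechanism $M$ that is $(\delta,\alpha,\varepsilon)$-RDP for $\Delta_1 = 2$.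
   Context: $\mathrm{Ber}(p)$: Bernoulli distribution. For $\alpha>1$, $D_\alpha(P\|Q)=\frac{1}{\alpha-1}\log\sum_x P(x)^\alpha Q(x)^{1-\alpha}$ and $D^\delta_\alpha(P\|Q)=\inf\{D_\alpha(P'\|Q'): P=(1-\delta)P'+\delta P'',\ Q=(1-\delta)Q'+\delta Q''\}$ over probability distributions. A randomized algorithm $M$ is $(\delta,\alpha,\varepsilon)$-RDP w.r.t. a neighboring relation if $D^\delta_\alpha(M(X)\|M(X'))\le\varepsilon$ for all neighbors $X,X'$ (both orders). Datasets are $X\in\mathbb{Z}_{\ge0}^U$; $X, X'$ are neighbors for $\Delta_1=\Delta$ if $\|X-X'\|_1\le\Delta$. A partition selection mechanism is a randomized map $M$ from datasets to subsets of $U$ with $M(X)\subseteq\{u: X_u>0\}$ always. *)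

(* Defs.v *)
From HB Require Import structures.
From mathcomp Require Import all_boot all_order all_algebra.
From mathcomp Require Import all_classical all_reals all_analysis.
Set Implicit Arguments. Unset Strict Implicit. Unset Printing Implicit Defensive.
Import Order.TTheory GRing.Theory Num.Theory.
Local Open Scope classical_set_scope.
Local Open Scope ring_scope.

Section Defs.
Variable R : realType.

Definition is_distr (T : finType) (P : T -> R) : Prop :=
  (forall x, 0 <= P x) /\ \sum_(x : T) P x = 1.

Definition Ber (p : R) : bool -> R := fun b => if b then p else 1 - p.

(* Renyi divergence of order a, with the standard conventions:
   +oo if P is not absolutely continuous w.r.t. Q, and terms with
   Q x = 0 = P x contribute 0. *)
Definition renyi (T : finType) (a : R) (P Q : T -> R) : \bar R :=
  if [exists x, (P x != 0) && (Q x == 0)] then +oo%E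
  else ((a - 1)^-1 * ln (\sum_(x | Q x != 0) P x `^ a * Q x `^ (1 - a)))%:E.

Definition renyi_delta (T : finType) (delta a : R) (P Q : T -> R) : \bar R :=
  ereal_inf [set d | exists P' P'' Q' Q'' : T -> R,
    [/\ is_distr P', is_distr P'', is_distr Q', is_distr Q'' &
        [/\ (forall x, P x = (1 - delta) * P' x + delta * P'' x),
             (forall x, Q x = (1 - delta) * Q' x + delta * Q'' x) &
             d = renyi a P' Q']]].

Definition Lset (delta a eps q : R) : set R :=
  [set p | q <= p <= 1 /\
     (renyi_delta delta a (Ber p) (Ber q) <= eps%:E)%E /\
     (renyi_delta delta a (Ber q) (Ber p) <= eps%:E)%E].

Definition is_max (S : set R) (p : R) : Prop := S p /\ (forall p', S p' -> p' <= p).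

Variable U : finType.
Definition dataset := U -> nat.

Definition l1_dist (X X' : dataset) : nat :=
  \sum_(u : U) ((X u - X' u) + (X' u - X u))%N.
Definition neighbors (Delta : nat) (X X' : dataset) : Prop := (l1_dist X X' <= Delta)%N.

(* A randomized map from datasets to subsets of U: M X S = Pr[M(X) = S]. *)
Definition mechanism := dataset -> {set U} -> R.

Definition is_partition_selection (M : mechanism) : Prop :=
  forall X, is_distr (M X) /\
    (forall S, M X S != 0 -> S \subset [set u | (0 < X u)%N]).

Definition is_RDP (delta a eps : R) (Delta : nat) (M : mechanism) : Prop :=
  forall X X', neighbors Delta X X' ->
    (renyi_delta delta a (M X) (M X') <= eps%:E)%E /\
    (renyi_delta delta a (M X') (M X) <= eps%:E)%E.

Definition expected_size (M : mechanism) (X : dataset) : R :=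
  \sum_(S : {set U}) M X S * #|S|%:R.

End Defs.

(* Main.v *)
Require Import Defs.
From HB Require Import structures.
From mathcomp Require Import all_boot all_order all_algebra.
From mathcomp Require Import all_classical all_reals all_analysis.
From mathcomp Require Import lra zify.
Import Order.TTheory GRing.Theory Num.Theory.
Local Open Scope classical_set_scope.
Local Open Scope ring_scope.
Set Implicit Arguments. Unset Strict Implicit. Unset Printing Implicit Defensive.

Section H.
Variable R : realType.

Lemma renyi_self (T : finType) (a : R) (P : T -> R) :
  is_distr P -> renyi a P P = 0%:E.
Proof.
move=> [P0 P1]; rewrite /renyi.
have -> : [exists x, (P x != 0) && (P x == 0)] = false.
  by apply/negbTE/existsPn => x; case: (P x == 0).
congr (_%:E).
rewrite (eq_bigr (fun x => P x)); last first.
  move=> x Px; rewrite -powRD; last by rewrite Px implybT.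
  by rewrite addrC subrK powRr1.
rewrite big_mkcond /= (eq_bigr (fun x => P x)) ?P1 ?ln1 ?mulr0 //.
by move=> x _; case: eqP.
Qed.

Lemma rd_self (T : finType) (delta a : R) (P : T -> R) :
  is_distr P -> (renyi_delta delta a P P <= 0%:E)%E.
Proof.
move=> dP; rewrite -(renyi_self a dP).
apply: ereal_inf_lbound; exists P, P, P, P; split => //; split => // x;
  by rewrite -mulrDl subrK mul1r.
Qed.

Lemma zero_event (T : finType) (delta a e : R) (P Q : T -> R) (A : pred T) :
  0 < delta < 1 -> (renyi_delta delta a P Q <= e%:E)%E ->
  (forall x, A x -> Q x = 0) -> \sum_(x | A x) P x <= delta.
Proof.
move=> /andP[d0 d1] H QA.
have : (renyi_delta delta a P Q < +oo)%E by apply: le_lt_trans H _; rewrite ltry.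
move=> /ereal_inf_lt [d [P' [P'' [Q' [Q'' [[P'0 _] [P''0 P''1] [Q'0 _] [Q''0 _] [eP eQ ->]]]]]] dlt].
have nex : ~~ [exists x, (P' x != 0) && (Q' x == 0)].
  by apply/negP => ex; move: dlt; rewrite /renyi ex.
move/existsPn: nex => nex.
have eq1 : forall x, A x -> P x = delta * P'' x.
  move=> x Ax.
  have Q'x : Q' x = 0.
    have := QA x Ax; rewrite eQ => h.
    have := Q'0 x; have := Q''0 x => h1 h2.
    apply/eqP; rewrite eq_le h2 andbT.
    have : (1 - delta) * Q' x <= 0 by rewrite -h lerDl mulr_ge0 // ltW.
    by rewrite pmulr_rle0 // subr_gt0.
  have P'x : P' x = 0.
    by have := nex x; rewrite Q'x eqxx andbT negbK => /eqP.
  by rewrite eP P'x mulr0 add0r.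
rewrite (eq_bigr _ eq1) -mulr_sumr.
apply: (@le_trans _ _ (delta * 1)); last by rewrite mulr1.
apply: ler_wpM2l; first exact: ltW.
rewrite -P''1 (bigID A predT) /= lerDl.
by apply: sumr_ge0.
Qed.
End H.
Local Notation es := (finset.set0 : {set (ordinal 2)}).
Section E.
Variable R : realType.
Definition emb (S1 : {set 'I_2}) (F : bool -> R) : {set 'I_2} -> R :=
  fun S => if S == S1 then F true else if S == es then F false else 0.

Lemma sum2 (h : {set 'I_2} -> R) S1 : S1 != es ->
  (forall S, S != S1 -> S != es -> h S = 0) -> \sum_S h S = h S1 + h es.
Proof.
move=> S10 hz; rewrite (bigD1 S1) //= (bigD1 es) /=; last by rewrite eq_sym.
rewrite big1 ?addr0 // => S /andP[h1 h2]; exact: hz.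
Qed.

Lemma emb_distr S1 F : S1 != es -> is_distr F -> is_distr (emb S1 F).
Proof.
move=> S10 [F0 F1]; split.
  by move=> S; rewrite /emb; case: ifP => _ //; case: ifP.
rewrite (@sum2 _ S1) //; last by move=> S h1 h2; rewrite /emb (negbTE h1) (negbTE h2).
by rewrite /emb eqxx (eq_sym es S1) (negbTE S10) eqxx -F1 big_bool.
Qed.

Lemma renyi_emb S1 (a : R) P Q : S1 != es ->
  renyi a (emb S1 P) (emb S1 Q) = renyi a P Q.
Proof.
move=> S10; rewrite /renyi.
have -> : [exists x, (emb S1 P x != 0) && (emb S1 Q x == 0)] =
          [exists b, (P b != 0) && (Q b == 0)].
  apply/existsP/existsP => [[S]|[b hb]].
    rewrite /emb; case: ifP => _; first by exists true.
    case: ifP => _; first by exists false.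
    by rewrite eqxx.
  exists (if b then S1 else es); rewrite /emb.
  case: b hb => hb; first by rewrite eqxx.
  by rewrite (eq_sym es S1) (negbTE S10) eqxx.
case: ifP => // _; congr ((_ * ln _)%:E).
rewrite big_mkcond /= (@sum2 _ S1) //; last first.
  by move=> S h1 h2; rewrite /emb (negbTE h1) (negbTE h2) eqxx.
rewrite [in RHS]big_mkcond big_bool /= /emb eqxx (eq_sym es S1) (negbTE S10) eqxx.
by [].
Qed.

Lemma rd_emb S1 (delta a : R) P Q : S1 != es ->
  (renyi_delta delta a (emb S1 P) (emb S1 Q) <= renyi_delta delta a P Q)%E.
Proof.
move=> S10; apply: le_ereal_inf => d [P' [P'' [Q' [Q'' [dP' dP'' dQ' dQ'' [eP eQ ->]]]]]].
exists (emb S1 P'), (emb S1 P''), (emb S1 Q'), (emb S1 Q''); split; try exact: emb_distr.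
split; last by rewrite renyi_emb.
  by move=> S; rewrite /emb; case: ifP => _; [|case: ifP => _]; rewrite ?eP ?mulr0 ?addr0.
by move=> S; rewrite /emb; case: ifP => _; [|case: ifP => _]; rewrite ?eQ ?mulr0 ?addr0.
Qed.
End E.
Definition s1 : {set 'I_2} := [set ord0].
Definition s2 : {set 'I_2} := [set ord_max].
Definition sT : {set 'I_2} := finset.setTfor _.
Definition mk (x y : nat) : 'I_2 -> nat := fun i => if i == ord0 then x else y.

Lemma neqset (A B : {set 'I_2}) :
  ((ord0 \in A) != (ord0 \in B)) || ((ord_max \in A) != (ord_max \in B)) -> (A == B) = false.
Proof. by case/orP => h; apply/negbTE/eqP => E; move: h; rewrite E eqxx. Qed.
Ltac dis := by apply: neqset; rewrite !inE.
Lemma e1 : (s1 == es) = false. Proof. dis. Qed.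
Lemma e2 : (s2 == es) = false. Proof. dis. Qed.
Lemma eT : (sT == es) = false. Proof. dis. Qed.
Lemma e12 : (s1 == s2) = false. Proof. dis. Qed.
Lemma e1T : (s1 == sT) = false. Proof. dis. Qed.
Lemma e2T : (s2 == sT) = false. Proof. dis. Qed.
Lemma e1' : (es == s1) = false. Proof. dis. Qed.
Lemma e2' : (es == s2) = false. Proof. dis. Qed.
Lemma eT' : (es == sT) = false. Proof. dis. Qed.
Lemma e12' : (s2 == s1) = false. Proof. dis. Qed.
Lemma e1T' : (sT == s1) = false. Proof. dis. Qed.
Lemma e2T' : (sT == s2) = false. Proof. dis. Qed.
Definition eqs := (e1, e2, eT, e12, e1T, e2T, e1', e2', eT', e12', e1T', e2T').

Lemma ord2 (i : 'I_2) : i = ord0 \/ i = ord_max.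
Proof.
case: i => [[|[|k]] Hk]; [left|right|by []]; exact: val_inj.
Qed.

Lemma cases4 (S : {set 'I_2}) : [\/ S = es, S = s1, S = s2 | S = sT].
Proof.
case h0: (ord0 \in S); case h1: (ord_max \in S);
  [apply: Or44|apply: Or42|apply: Or43|apply: Or41]; apply/setP => i;
  case: (ord2 i) => ->; rewrite !inE ?h0 ?h1 //.
Qed.

Lemma sum4 (R : realType) (F : {set 'I_2} -> R) :
  \sum_S F S = F es + (F s1 + (F s2 + (F sT + 0))).
Proof.
rewrite (bigD1 es) //= (bigD1 s1) /=; last by rewrite ?eqs.
rewrite (bigD1 s2) /=; last by rewrite ?eqs.
rewrite (bigD1 sT) /=; last by rewrite ?eqs.
rewrite big_pred0 // => S.
by case: (cases4 S) => ->; rewrite ?eqxx ?andbF ?andFb.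
Qed.
Section M.
Variable R : realType.
Definition mech (S1 : {set 'I_2}) (f : dataset 'I_2 -> R) : mechanism R 'I_2 :=
  fun X => emb S1 (Ber (f X)).

Lemma Ber_distr (p : R) : 0 <= p <= 1 -> is_distr (Ber p).
Proof.
move=> /andP[p0 p1]; split; first by case => /=; rewrite ?subr_ge0.
by rewrite big_bool /= addrC subrK.
Qed.

Lemma mech_ps S1 f : S1 != es -> (forall X, 0 <= f X <= 1) ->
  (forall X, f X != 0 -> S1 \subset [set u | (0 < X u)%N]) ->
  is_partition_selection (mech S1 f).
Proof.
move=> S10 f01 fsub X; split; first exact/emb_distr/Ber_distr.
move=> S; rewrite /mech /emb; case: ifP => [/eqP -> /= |_]; first exact: fsub.
by case: ifP => [/eqP -> _|_]; [apply/fintype.subsetP => u; rewrite inE | rewrite eqxx].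
Qed.

Definition okp (delta a eps p q : R) :=
  (renyi_delta delta a (Ber p) (Ber q) <= eps%:E)%E /\
  (renyi_delta delta a (Ber q) (Ber p) <= eps%:E)%E.

Lemma mech_rdp S1 f delta a eps : S1 != es ->
  (forall X X', neighbors 2 X X' -> okp delta a eps (f X) (f X')) ->
  is_RDP delta a eps 2 (mech S1 f).
Proof.
move=> S10 ok X X' /ok [h1 h2]; split; rewrite /mech.
  exact: le_trans (rd_emb _ _ _ _ S10) h1.
exact: le_trans (rd_emb _ _ _ _ S10) h2.
Qed.

Lemma mech_size S1 f X : S1 != es ->
  expected_size (mech S1 f) X = f X * #|S1|%:R.
Proof.
move=> S10; rewrite /expected_size (@sum2 _ _ S1) //; last first.
  by move=> S h1 h2; rewrite /mech /emb (negbTE h1) (negbTE h2) mul0r.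
by rewrite /mech /emb eqxx (eq_sym es S1) (negbTE S10) eqxx cards0 mulr0 addr0.
Qed.

Lemma okp_self delta a eps p : 0 < eps -> 0 <= p <= 1 -> okp delta a eps p p.
Proof.
move=> e0 p01; have h := rd_self delta a (Ber_distr p01).
by split; apply: le_trans h _; rewrite lee_fin ltW.
Qed.

Lemma okp_sym delta a eps p q : okp delta a eps p q -> okp delta a eps q p.
Proof. by case. Qed.

Lemma ps_zero (M : mechanism R 'I_2) X (S : {set 'I_2}) : is_partition_selection M ->
  ~~ (S \subset [set u | (0 < X u)%N]) -> M X S = 0.
Proof.
move=> /(_ X) [_ h] nS; apply/eqP; apply: contraNT nS; exact: h.
Qed.

Lemma ps_ge0 (M : mechanism R 'I_2) X (S : {set 'I_2}) : is_partition_selection M -> 0 <= M X S.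
Proof. by move=> /(_ X) [[h _] _]. Qed.
End M.
Unset Implicit Arguments.
Theorem mainTheorem4 (R : realType) (a eps delta : R) (pi : nat -> R) :
  1 < a -> 0 < eps -> 0 < delta < 1 ->
  pi 0%N = 0 ->
  (forall n : nat, is_max (Lset delta a eps (pi n)) (pi n.+1)) ->
  pi 2%N > 3 * pi 1%N ->
  ~ exists Mstar : mechanism R 'I_2,
      [/\ is_partition_selection Mstar,
          is_RDP delta a eps 2 Mstar &
          forall M : mechanism R 'I_2,
            is_partition_selection M -> is_RDP delta a eps 2 M ->
            forall X : dataset 'I_2, expected_size M X <= expected_size Mstar X].
Proof.
move=> ha he hd hpi0 hmax h32 [M [psM rdpM optM]].
have hd' := hd; move/andP: hd' => [d0 d1].
have [[/andP[p01 p11] [h01 h01']] _] := hmax 0%N.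
have [[/andP[p12 p21] [h12 h12']] _] := hmax 1%N.
rewrite hpi0 in p01 h01 h01'.
have ok01 : okp delta a eps 0 (pi 1%N) by split.
have ok12 : okp delta a eps (pi 1%N) (pi 2%N) by split.
have dpi1 : delta <= pi 1%N.
  have [_ mx] := hmax 0%N; apply: mx; rewrite hpi0; split.
    by rewrite (ltW d0) (ltW d1).
  have r00 : renyi a (Ber 0) (Ber (0:R)) = 0%:E.
    by apply: renyi_self; apply: Ber_distr; rewrite lexx ler01.
  split; (apply: le_trans (_ : 0%:E <= _)%E; last by rewrite lee_fin ltW);
    rewrite -r00; apply: ereal_inf_lbound.
    exists (Ber 0), (Ber 1), (Ber 0), (Ber 0); split; try (apply: Ber_distr; rewrite ?lexx ?ler01 //).
    by split => // -[] /=; lra.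
  exists (Ber 0), (Ber 0), (Ber 0), (Ber 1); split; try (apply: Ber_distr; rewrite ?lexx ?ler01 //).
  by split => // -[] /=; lra.
have pi1_01 : 0 <= pi 1%N <= 1 by rewrite p01 p11.
have pi2_01 : 0 <= pi 2%N <= 1 by rewrite p21 (le_trans p01 p12).
have zero01 : 0 <= (0:R) <= 1 by rewrite lexx ler01.
pose fA (X : dataset 'I_2) : R := if (0 < X ord0)%N && (0 < X ord_max)%N then pi 1%N else 0.
have psA : is_partition_selection (mech sT fA).
  apply: mech_ps; first by rewrite eT.
    by move=> X; rewrite /fA; case: ifP.
  move=> X; rewrite /fA; case: ifP => [/andP[h0 h1] _|_]; last by rewrite eqxx.
  apply/fintype.subsetP => u _; rewrite in_setE.
  by case: (ord2 u) => ->.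
have rdpA : is_RDP delta a eps 2 (mech sT fA).
  apply: mech_rdp; first by rewrite eT.
  move=> X X' _; rewrite /fA; case: ifP => _; case: ifP => _;
    by [apply: okp_self | apply: okp_sym | ].
pose fB (X : dataset 'I_2) : R :=
  if (3 <= X ord0)%N then pi 2%N else if (1 <= X ord0)%N then pi 1%N else 0.
have psB : is_partition_selection (mech s1 fB).
  apply: mech_ps; first by rewrite e1.
    by move=> X; rewrite /fB; case: ifP => _ //; case: ifP.
  move=> X; rewrite /fB => hX.
  have h0 : (0 < X ord0)%N.
    case: (X ord0) hX => [|n] //; by rewrite eqxx.
  apply/fintype.subsetP => u; rewrite inE => /eqP ->; by rewrite in_setE.
have rdpB : is_RDP delta a eps 2 (mech s1 fB).
  apply: mech_rdp; first by rewrite e1.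
  move=> X X' hn.
  have hl : ((X ord0 - X' ord0) + (X' ord0 - X ord0) <= 2)%N.
    apply: leq_trans hn; by rewrite /l1_dist big_ord_recl leq_addr.
  rewrite /fB; move: hl; move: (X ord0) (X' ord0) => x y hl.
  case: (leqP x 2) => c1; case: (leqP y 2) => c2; case: (leqP x 0) => c3;
    case: (leqP y 0) => c4;
    first [ by apply: okp_self | exact: ok12 | exact: okp_sym ok12 | exact: ok01
          | exact: okp_sym ok01 | by exfalso; clear -hl c1 c2 c3 c4; lia ].
have n11_00 : neighbors 2 (mk 1 1) (mk 0 0).
  by rewrite /neighbors /l1_dist !big_ord_recl big_ord0.
have n31_11 : neighbors 2 (mk 3 1) (mk 1 1).
  by rewrite /neighbors /l1_dist !big_ord_recl big_ord0.
have n31_30 : neighbors 2 (mk 3 1) (mk 3 0).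
  by rewrite /neighbors /l1_dist !big_ord_recl big_ord0.
have ge0 := fun X S => ps_ge0 X S psM.
have z00 : forall S, S != es -> M (mk 0 0) S = 0.
  move=> S /finset.set0Pn [x xS]; apply: ps_zero => //.
  apply/negP => /fintype.subsetP /(_ x xS) /set_mem /=; rewrite /mk.
  by case: (x == ord0).
have z30_2 : M (mk 3 0) s2 = 0.
  apply: ps_zero => //; apply/negP => /fintype.subsetP /(_ ord_max).
  by rewrite /s2 inE => /(_ isT) /set_mem.
have z30_T : M (mk 3 0) sT = 0.
  apply: ps_zero => //; apply/negP => /fintype.subsetP /(_ ord_max).
  by rewrite /sT inE => /(_ isT) /set_mem.
have Z1 : \sum_(S | S != es) M (mk 1 1) S <= delta.
  apply: (zero_event hd (rdpM _ _ n11_00).1) => S; exact: z00.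
rewrite big_mkcond sum4 /= eqxx !eqs /= in Z1.
have hA := optM _ psA rdpA (mk 1 1).
rewrite mech_size ?eT // /expected_size sum4 /fA /= in hA.
have cs1 : #|s1| = 1%N by rewrite /s1 cards1.
have cs2 : #|s2| = 1%N by rewrite /s2 cards1.
have csT : #|sT| = 2%N by rewrite /sT cardsT card_ord.
rewrite cards0 cs1 cs2 csT in hA.
have m1 : M (mk 1 1) s1 = 0.
  have := ge0 (mk 1 1) s1; have := ge0 (mk 1 1) s2; have := ge0 (mk 1 1) sT.
  move: Z1 hA dpi1; clear; lra.
have Z2 : \sum_(S | S == s1) M (mk 3 1) S <= delta.
  by apply: (zero_event hd (rdpM _ _ n31_11).1) => S /eqP ->.
rewrite big_pred1_eq in Z2.
have Z3 : \sum_(S | (S == s2) || (S == sT)) M (mk 3 1) S <= delta.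
  by apply: (zero_event hd (rdpM _ _ n31_30).1) => S /orP [] /eqP ->.
rewrite big_mkcond sum4 /= ?eqxx ?eqs /= in Z3.
have hB := optM _ psB rdpB (mk 3 1).
rewrite mech_size ?e1 // /expected_size sum4 /fB /= in hB.
rewrite cards0 cs1 cs2 csT in hB.
have := ge0 (mk 3 1) s1; have := ge0 (mk 3 1) s2; have := ge0 (mk 3 1) sT.
have := ge0 (mk 3 1) es.
move: Z2 Z3 hB dpi1 h32; clear; lra.
Qed.
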